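(* Consider SEG: $X_{t+1/2}=X_t-\gamma F_t$, $X_{t+1}=X_t-\alpha\gamma F_{t+1/2}$, where $F_t=F(X_t)+U_t(X_t)$ and $F_{t+1/2}=F(X_{t+1/2})+U_{t+1/2}(X_{t+1/2})$. Let $F:\mathbb{R}^d\to\mathbb{R}^d$ be $L$-Lipschitz, let $x^*\in X^*=\{x:F(x)=0\}$ satisfy $\langle F(x),x-x^*\rangle\ge\mu\|x-x^*\|^2-\lambda$ for all $x$ (with $\lambda\ge0,\mu>0$), and assume the stochastic oracle assumptions of the context. Let $Z_t=F_{t+1/2}$ and $\mathrm{drift}_t=\gamma\,\mathbb{E}[\langle Z_t,X_t-x^*\rangle\mid\mathcal{F}_t]$. If $0<\gamma<\frac1{2\mu+\sqrt3L}$, then $$-\mathrm{drift}_t\le-\frac{\mu\gamma}{2}\|X_t-x^*\|^2+(\gamma\lambda+3\gamma^2\sigma^2).$$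
   Context: Stochastic oracle: noise fields are i.i.d. random fields; filtration $(\mathcal{F}_t)$ (history of the iterates) with $\mathcal{F}_{t+1/2}=\mathcal{F}_t$; $U_t(X_t)$ is $\mathcal{F}_{t+1}$- but not $\mathcal{F}_t$-measurable; $\mathbb{E}[U_t(x)\mid\mathcal{F}_t]=0$ and $\mathbb{E}[\|U_t(x)\|^2\mid\mathcal{F}_t]\le\sigma^2$ for all $x$ (and likewise for $U_{t+1/2}$). *)

(* Defs.v *)
From HB Require Import structures.
From mathcomp Require Import all_boot all_order all_algebra.
From mathcomp Require Import all_classical all_reals all_analysis.
Set Implicit Arguments. Unset Strict Implicit. Unset Printing Implicit Defensive.
Import Order.TTheory GRing.Theory Num.Theory.
Local Open Scope ring_scope.

Definition dotv {R : realType} {d : nat} (u v : 'rV[R]_d) : R :=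
  \sum_(i < d) u 0 i * v 0 i.
Definition sqnorm {R : realType} {d : nat} (u : 'rV[R]_d) : R := dotv u u.
Definition normv {R : realType} {d : nat} (u : 'rV[R]_d) : R := Num.sqrt (sqnorm u).

(* One SEG leading step from the (F_t-measurable, hence fixed) point x:
   X_{t+1/2} = x - gamma * (F x + U1(w1, x)). *)
Definition seg_half {R : realType} {d : nat} {O1 : Type}
  (F : 'rV[R]_d -> 'rV[R]_d) (U1 : O1 -> 'rV[R]_d -> 'rV[R]_d)
  (gamma : R) (x : 'rV[R]_d) (w1 : O1) : 'rV[R]_d :=
  x - gamma *: (F x + U1 w1 x).

Definition seg_Z {R : realType} {d : nat} {O1 O2 : Type}
  (F : 'rV[R]_d -> 'rV[R]_d) (U1 : O1 -> 'rV[R]_d -> 'rV[R]_d)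
  (U2 : O2 -> 'rV[R]_d -> 'rV[R]_d)
  (gamma : R) (x : 'rV[R]_d) (w1 : O1) (w2 : O2) : 'rV[R]_d :=
  let y := seg_half F U1 gamma x w1 in F y + U2 w2 y.

Definition oracle_noise {R : realType} {d : nat} {dO : measure_display}
  {O : measurableType dO} (P : probability O R)
  (U : O -> 'rV[R]_d -> 'rV[R]_d) (sigma : R) : Prop :=
  forall y : 'rV[R]_d,
    (forall i : 'I_d,
        P.-integrable setT (fun w => ((U w y) 0 i)%:E) /\
        (\int[P]_w ((U w y) 0 i)%:E = 0)%E) /\
    (\int[P]_w (sqnorm (U w y))%:E <= (sigma ^+ 2)%:E)%E.

(* drift_t = gamma * E[ <Z_t, X_t - x*> | F_t ], computed (given X_t = x)
   by integrating first the half-step noise, then the leading-step noise. *)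
Definition seg_drift {R : realType} {d : nat} {d1 d2 : measure_display}
  {O1 : measurableType d1} {O2 : measurableType d2}
  (P1 : probability O1 R) (P2 : probability O2 R)
  (F : 'rV[R]_d -> 'rV[R]_d) (U1 : O1 -> 'rV[R]_d -> 'rV[R]_d)
  (U2 : O2 -> 'rV[R]_d -> 'rV[R]_d) (gamma : R) (x xs : 'rV[R]_d) : \bar R :=
  (gamma%:E * \int[P1]_w1 \int[P2]_w2
      (dotv (seg_Z F U1 U2 gamma x w1 w2) (x - xs))%:E)%E.

(* Main.v *)
Require Import Defs.
From HB Require Import structures.
From mathcomp Require Import all_boot all_order all_algebra.
From mathcomp Require Import all_classical all_reals all_analysis.
From mathcomp Require Import ring lra.
Import Order.TTheory GRing.Theory Num.Theory.
Local Open Scope ring_scope.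

Set Implicit Arguments.
Section Alg.
Context {R : realType} {d : nat}.
Implicit Types (u v w : 'rV[R]_d).

Lemma dotvC u v : dotv u v = dotv v u.
Proof. by rewrite /dotv; apply: eq_bigr => i _; rewrite mulrC. Qed.
Lemma dotvDl u v w : dotv (u + v) w = dotv u w + dotv v w.
Proof. by rewrite /dotv -big_split; apply: eq_bigr => i _; rewrite !mxE mulrDl. Qed.
Lemma dotvDr u v w : dotv w (u + v) = dotv w u + dotv w v.
Proof. by rewrite dotvC dotvDl !(dotvC w). Qed.
Lemma dotvZl (k : R) u v : dotv (k *: u) v = k * dotv u v.
Proof. by rewrite /dotv mulr_sumr; apply: eq_bigr => i _; rewrite !mxE mulrA. Qed.
Lemma dotvZr (k : R) u v : dotv v (k *: u) = k * dotv v u.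
Proof. by rewrite dotvC dotvZl dotvC. Qed.
Lemma dotvNl u v : dotv (- u) v = - dotv u v.
Proof. by rewrite -scaleN1r dotvZl mulN1r. Qed.
Lemma dotvNr u v : dotv v (- u) = - dotv v u.
Proof. by rewrite dotvC dotvNl dotvC. Qed.
Lemma sqnorm_ge0 u : 0 <= sqnorm u.
Proof. by rewrite /sqnorm /dotv; apply: sumr_ge0 => i _; rewrite -expr2 sqr_ge0. Qed.

Lemma pointwise (a u r p : 'rV[R]_d) (g mu lam L : R) :
  0 < g ->
  mu * sqnorm (a - g *: (u + r)) - lam <= dotv (p + u) (a - g *: (u + r)) ->
  sqnorm p <= L ^+ 2 * g ^+ 2 * sqnorm (u + r) ->
  forall k, k = g * (1 + L ^+ 2 * g ^+ 2) / 2 ->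
  mu * sqnorm (a - g *: u) - lam + (g - k) * sqnorm u
   + dotv (- (2 * mu * g) *: (a - g *: u) + (g - 2 * k) *: u) r
   + (mu * g ^+ 2 - k) * sqnorm r
  <= dotv (p + u) a.
Proof.
move=> g0 H1 H2 k ->.
have H3 := sqnorm_ge0 (p + (u + r)).
move: H1 H2 H3; rewrite /sqnorm.
rewrite !(dotvDl, dotvDr, dotvZl, dotvZr, dotvNl, dotvNr).
move=> H1 H2 H3.
have E1 := dotvC u a; have E2 := dotvC r a; have E3 := dotvC r u.
have E4 := dotvC u p; have E5 := dotvC r p; have E6 := dotvC a p.
have H3' := mulr_ge0 (ltW g0) H3.
nra.
Qed.
Lemma sqnormZ (k : R) u : sqnorm (k *: u) = k ^+ 2 * sqnorm u.
Proof. by rewrite /sqnorm dotvZl dotvZr mulrA expr2. Qed.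
Lemma sqnormN u : sqnorm (- u) = sqnorm u.
Proof. by rewrite /sqnorm dotvNl dotvNr opprK. Qed.
Lemma sqnorm_par u v : sqnorm (u + v) <= 2 * sqnorm u + 2 * sqnorm v.
Proof.
have H := sqnorm_ge0 (u - v); move: H; rewrite /sqnorm.
rewrite !(dotvDl, dotvDr, dotvNl, dotvNr) (dotvC v u); lra.
Qed.
End Alg.

Lemma final_ineq (R : realType) (g mu lam L s3 A B U e S : R) :
  0 < g -> 0 < mu -> 0 <= L -> s3 * s3 = 3 -> 0 <= s3 ->
  g * (2 * mu + s3 * L) < 1 -> 0 <= U -> 0 <= e -> e <= S ->
  A <= 2 * B + 2 * (g ^+ 2 * U) ->
  forall k, k = g * (1 + L ^+ 2 * g ^+ 2) / 2 ->
  - (- (mu * g / 2) * A + (g * lam + 3 * g ^+ 2 * S)) <=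
  g * (mu * B - lam + (g - k) * U + (mu * g ^+ 2 - k) * e).
Proof.
move=> g0 mu0 L0 s33 s30 gb U0 e0 eS AB k hk.
have s31 : 1 <= s3 by nra.
have lg0 : 0 <= L * g by apply: mulr_ge0 => //; exact: ltW.
have lg1 : L * g <= 1 by nra.
have key : 2 * (mu * g) <= 1 - (L * g) ^+ 2 by nra.
have t1 : 0 <= (g - k - mu * g ^+ 2) * U.
  apply: mulr_ge0 => //.
  have -> : g - k - mu * g ^+ 2 = g * ((1 - (L * g) ^+ 2) / 2 - mu * g).
    by rewrite hk; field.
  by apply: mulr_ge0; [exact: ltW | lra].
have k0 : 0 <= k by rewrite hk; apply: mulr_ge0 => //; apply: mulr_ge0;
  [exact: ltW | apply: addr_ge0 => //; apply: mulr_ge0; exact: sqr_ge0].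
have kg : k <= g.
  rewrite hk; have : (L ^+ 2 * g ^+ 2) <= 1 by rewrite -exprMn; nra.
  move=> h; nra.
have t2 : 0 <= mu * g ^+ 2 * e by apply: mulr_ge0 => //; apply: mulr_ge0;
  [exact: ltW | exact: sqr_ge0].
have t3 : k * e <= k * S by apply: ler_wpM2l.
have S0 : 0 <= S by exact: le_trans eS.
have t4 : k * S <= g * S by apply: ler_wpM2r.
have t5 : mu * A <= mu * (2 * B + 2 * (g ^+ 2 * U)) by apply: ler_wpM2l => //; exact: ltW.
have inner : mu * A / 2 - lam - 3 * g * S <=
    mu * B - lam + (g - k) * U + (mu * g ^+ 2 - k) * e by nra.
have := ler_wpM2l (ltW g0) inner.
suff -> : - (- (mu * g / 2) * A + (g * lam + 3 * g ^+ 2 * S)) =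
   g * (mu * A / 2 - lam - 3 * g * S) by [].
by ring.
Qed.
Section Int.
Local Open Scope ereal_scope.
Context {R : realType} {dd : measure_display} {T : measurableType dd}.

Lemma int_mono (mu : {measure set T -> \bar R}) (f h : T -> \bar R) :
  (forall x, h x <= f x) ->
  \int[mu]_(x in setT) h x <= \int[mu]_(x in setT) f x.
Proof.
move=> hf; rewrite /integral !patch_setT.
apply: leeB; apply: ereal_sup_le => _ [s /= Hs <-]; exists s => //= x.
- apply: le_trans (Hs x) _; apply: (@funepos_le _ _ setT); [by move=> y _; exact: hf|exact: in_setT].
- apply: le_trans (Hs x) _; apply: (@funeneg_le _ _ setT); [by move=> y _; exact: hf|exact: in_setT].
Qed.

Variable (P : probability T R).

Lemma int_cst (c : R) : \int[P]_(x in setT) c%:E = c%:E.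
Proof. rewrite integral_cst //. rewrite -[RHS]mule1; congr (_ * _). exact: probability_setT. Qed.

Lemma icst (c : R) : P.-integrable setT (fun _ => c%:E).
Proof. exact: (finite_measure_integrable_cst P c measurableT). Qed.

Lemma dot_noise (d : nat) (V : T -> 'rV[R]_d) (v : 'rV[R]_d) :
  (forall i : 'I_d, P.-integrable setT (fun w => (V w 0 i)%:E) /\
        \int[P]_w (V w 0 i)%:E = 0) ->
  P.-integrable setT (fun w => (dotv v (V w))%:E) /\
  \int[P]_w (dotv v (V w))%:E = 0.
Proof.
move=> HV.
have E : (fun w => (dotv v (V w))%:E) =
   (fun w => \sum_(i < d) ((v 0 i)%:E * (V w 0 i)%:E)).
  by apply/funext => w; rewrite /dotv -sumEFin.
have Hi : forall i : 'I_d, P.-integrable setT (fun w => (v 0 i)%:E * (V w 0 i)%:E).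
  by move=> i; apply: integrableZl => //; case: (HV i).
rewrite E; split.
  by apply: integrable_sum; try exact: measurableT; move=> i _; exact: Hi.
rewrite integral_sum //; try exact: measurableT; apply: big1 => i _.
by rewrite integralZl //; [case: (HV i) => _ ->; rewrite mule0 | case: (HV i)].
Qed.

Lemma sq_noise (d : nat) (V : T -> 'rV[R]_d) (s : R) :
  (forall i : 'I_d, P.-integrable setT (fun w => (V w 0 i)%:E)) ->
  \int[P]_w (sqnorm (V w))%:E <= s%:E ->
  P.-integrable setT (fun w => (sqnorm (V w))%:E).
Proof.
move=> HV Hs; apply/integrableP; split.
  apply/measurable_realfun.measurable_EFinP; rewrite /sqnorm /dotv.
  apply: measurable_sum => i; apply: measurable_realfun.measurable_funM;
  by apply/measurable_realfun.measurable_EFinP; apply: measurable_int (HV i).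
apply: (le_lt_trans _ (ltry s)); apply: le_trans Hs.
apply: int_mono => w; rewrite gee0_abs // lee_fin.
by rewrite /sqnorm /dotv; apply: sumr_ge0 => i _; rewrite -expr2 sqr_ge0.
Qed.
End Int.

Theorem propositionB2 (R : realType) (d : nat)
  (d1 d2 : measure_display) (O1 : measurableType d1) (O2 : measurableType d2)
  (P1 : probability O1 R) (P2 : probability O2 R)
  (F : 'rV[R]_d -> 'rV[R]_d) (L mu lambda sigma gamma : R)
  (xs x : 'rV[R]_d)
  (U1 : O1 -> 'rV[R]_d -> 'rV[R]_d) (U2 : O2 -> 'rV[R]_d -> 'rV[R]_d) :
  0 <= L ->
  (forall y z : 'rV[R]_d, normv (F y - F z) <= L * normv (y - z)) ->
  F xs = 0 ->
  0 <= lambda -> 0 < mu ->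
  (forall y : 'rV[R]_d, dotv (F y) (y - xs) >= mu * sqnorm (y - xs) - lambda) ->
  0 <= sigma ->
  oracle_noise P1 U1 sigma ->
  oracle_noise P2 U2 sigma ->
  0 < gamma -> gamma < 1 / (2 * mu + Num.sqrt 3 * L) ->
  (- seg_drift P1 P2 F U1 U2 gamma x xs <=
     (- (mu * gamma / 2) * sqnorm (x - xs)
      + (gamma * lambda + 3 * gamma ^+ 2 * sigma ^+ 2))%:E)%E.
Proof.
move=> L0 Lip Fxs0 lam0 mu0 mono s0 N1 N2 g0 gb.
have inner : forall w1, (\int[P2]_w2
    (dotv (seg_Z F U1 U2 gamma x w1 w2) (x - xs))%:E =
    (dotv (F (seg_half F U1 gamma x w1)) (x - xs))%:E)%E.
  move=> w1; set y := seg_half F U1 gamma x w1.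
  have [i1 e1] := @dot_noise _ _ _ P2 _ (fun w => U2 w y) (x - xs) (N2 y).1.
  transitivity (\int[P2]_w2 ((dotv (F y) (x - xs))%:E +
                (dotv (x - xs) (U2 w2 y))%:E))%E.
    by apply: eq_integral => w2 _; rewrite /seg_Z -/y dotvDl EFinD (@dotvC _ _ (U2 w2 y)).
  rewrite integralD //; first by rewrite int_cst e1 adde0.
  exact: icst.
rewrite /seg_drift.
under eq_integral => w1 _ do rewrite inner.
set a := x - xs; set u := F x.
pose k := gamma * (1 + L ^+ 2 * gamma ^+ 2) / 2.
pose v := - (2 * mu * gamma) *: (a - gamma *: u) + (gamma - 2 * k) *: u.
pose K := mu * sqnorm (a - gamma *: u) - lambda + (gamma - k) * sqnorm u.
pose c := mu * gamma ^+ 2 - k.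
have lowb : (\int[P1]_w (K%:E + (dotv v (U1 w x))%:E + c%:E * (sqnorm (U1 w x))%:E)
   <= \int[P1]_w1 (dotv (F (seg_half F U1 gamma x w1)) a)%:E)%E.
  apply: int_mono => w1; rewrite -EFinM -!EFinD lee_fin.
  set r := U1 w1 x; set y := seg_half F U1 gamma x w1.
  have Hy : y - xs = a - gamma *: (u + r) by rewrite /y /seg_half addrAC.
  have Hyx : y - x = - (gamma *: (u + r)).
    by rewrite /y /seg_half addrAC subrr add0r.
  have H1 : mu * sqnorm (a - gamma *: (u + r)) - lambda <=
      dotv ((F y - u) + u) (a - gamma *: (u + r)).
    by rewrite subrK -Hy; exact: mono.
  have H2 : sqnorm (F y - u) <= L ^+ 2 * gamma ^+ 2 * sqnorm (u + r).
    have := Lip y x; rewrite Hyx /normv sqnormN sqnormZ.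
    have A0 := sqnorm_ge0 (F y - u).
    have B0 : 0 <= gamma ^+ 2 * sqnorm (u + r).
      by apply: mulr_ge0; [exact: sqr_ge0 | exact: sqnorm_ge0].
    have sA := sqr_sqrtr A0; have sB := sqr_sqrtr B0.
    have sA0 := sqrtr_ge0 (sqnorm (F y - u)).
    have sB0 := sqrtr_ge0 (gamma ^+ 2 * sqnorm (u + r)).
    move=> HL; rewrite -/u in HL.
    set sa := Num.sqrt (sqnorm (F y - u)) in sA sA0 HL *.
    set sb := Num.sqrt (gamma ^+ 2 * sqnorm (u + r)) in sB sB0 HL *.
    have HL0 : 0 <= L * sb + sa by apply: addr_ge0 => //; exact: mulr_ge0.
    have HL1 : 0 <= L * sb - sa by rewrite subr_ge0.
    have P0 := mulr_ge0 HL1 HL0.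
    have P1' := congr1 (fun t => L ^+ 2 * t) sB; simpl in P1'.
    rewrite -sA -mulrA -P1'; nra.
  have := @pointwise _ _ a u r (F y - u) gamma mu lambda L g0 H1 H2 k erefl.
  by rewrite subrK.
have [iv ev] := @dot_noise _ _ _ P1 _ (fun w => U1 w x) v (N1 x).1.
have isq := @sq_noise _ _ _ P1 _ (fun w => U1 w x) (sigma ^+ 2)
   (fun i => ((N1 x).1 i).1) (N1 x).2.
have I0 : P1.-integrable setT (fun w => (K%:E + (dotv v (U1 w x))%:E)%E).
  by apply: integrableD; try exact: measurableT; [exact: icst | exact: iv].
have I1 : P1.-integrable setT (fun w => (c%:E * (sqnorm (U1 w x))%:E)%E).
  by apply: integrableZl; try exact: measurableT; exact: isq.
have Eh : (\int[P1]_w (K%:E + (dotv v (U1 w x))%:E + c%:E * (sqnorm (U1 w x))%:E)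
   = K%:E + c%:E * \int[P1]_w (sqnorm (U1 w x))%:E)%E.
  rewrite (integralD measurableT I0 I1).
  rewrite (integralD measurableT (icst P1 K) iv).
  by rewrite int_cst ev adde0 (integralZl measurableT isq).
have fe := integrable_fin_num measurableT isq.
set e := fine (\int[P1]_w (sqnorm (U1 w x))%:E)%E.
have He : (\int[P1]_w (sqnorm (U1 w x))%:E)%E = e%:E by rewrite fineK.
have e0 : 0 <= e.
  rewrite -lee_fin -He; apply: integral_ge0 => w _; rewrite lee_fin; exact: sqnorm_ge0.
have eS : e <= sigma ^+ 2 by rewrite -lee_fin -He; exact: (N1 x).2.
have lowI : ((K + c * e)%:E <=
    \int[P1]_w1 (dotv (F (seg_half F U1 gamma x w1)) a)%:E)%E.
  by rewrite EFinD EFinM -He -Eh; exact: lowb.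
have g0E : (0 <= gamma%:E)%E by rewrite lee_fin ltW.
have Hm := lee_wpmul2l g0E lowI.
rewrite leeNl; apply: le_trans Hm; rewrite -EFinM -EFinN lee_fin.
have s33 : Num.sqrt 3 * Num.sqrt 3 = 3 :> R by rewrite -expr2 sqr_sqrtr.
have s30 := sqrtr_ge0 (3 : R).
have Dpos : 0 < 2 * mu + Num.sqrt 3 * L.
  by apply: ltr_wpDr; [exact: mulr_ge0 | rewrite mulr_gt0].
have gb' : gamma * (2 * mu + Num.sqrt 3 * L) < 1.
  by rewrite -ltr_pdivlMr // -[X in X / _]mul1r.
have AB : sqnorm a <= 2 * sqnorm (a - gamma *: u) + 2 * (gamma ^+ 2 * sqnorm u).
  have := sqnorm_par (a - gamma *: u) (gamma *: u).
  by rewrite subrK sqnormZ.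
exact: (@final_ineq R gamma mu lambda L (Num.sqrt 3) (sqnorm a)
  (sqnorm (a - gamma *: u)) (sqnorm u) e (sigma ^+ 2) g0 mu0 L0 s33 s30 gb'
  (sqnorm_ge0 u) e0 eS AB k erefl).
Qed.
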